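(* Let $m\ge2$ and $f_1,\dots,f_m:X\to\mathbb R_{+\infty}$ with $\bigcap_{i=1}^m\operatorname{dom} f_i\ne\emptyset$. Consider: (i) there is $K>1$ such that $\partial_\varepsilon(\sum_i f_i)(x)\subset\sum_{i=1}^m\partial_{K\varepsilon}f_i(x)$ for all $x\in\bigcap_i\operatorname{dom} f_i$ and $\varepsilon>0$; (ii) there is $K>0$ such that $\operatorname{cl}\big(\sum_{i=1}^m\partial_\varepsilon f_i(x)\big)\subset\sum_{i=1}^m\partial_{K\varepsilon}f_i(x)$ for all $x\in\bigcap_i\operatorname{dom} f_i$ and $\varepsilon>0$; (iii) for all $x\in X$ and $\varepsilon\ge0$, $\partial_\varepsilon(\sum_i f_i)(x)=\bigcap_{\eta>0}\bigcup_{\varepsilon_i\ge0,\ \sum_i\varepsilon_i=\varepsilon+\eta}\sum_{i=1}^m\partial_{\varepsilon_i}f_i(x)$; (iv) $(\sum_{i=1}^m f_i)^*=f_1^*\square\cdots\square f_m^*$; (v) $f_1^*\square\cdots\square f_m^*$ is lower semicontinuous on $\mathcal L$. Then (i)$\Leftrightarrow$(iii)$\Leftrightarrow$(iv)$\Rightarrow$(v)$\Rightarrow$(ii). If moreover, for all $x\in\bigcap_i\operatorname{dom} f_i$ and $\varepsilon\ge0$, $\partial_\varepsilon(\sum_i f_i)(x)=\bigcap_{\eta>0}\operatorname{cl}\big(\bigcup_{\varepsilon_i\ge0,\ \sum_i\varepsilon_i=\varepsilon+\eta}\sum_{i=1}^m\partial_{\varepsilon_i}f_i(x)\big)$ (which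 holds in particular if $\operatorname{cl}(\sum_i\operatorname{epi} f_i^* )=\operatorname{epi}(\sum_i f_i)^*$), then all five properties are equivalent.
   Context: $X$ is a nonempty set; $\mathbb R_{+\infty}=\mathbb R\cup\{+\infty\}$. $\mathcal L$ is a family of functions $X\to\mathbb R$ closed under pointwise addition and real scalar multiplication, equipped with the pointwise convergence topology (weakest topology making all evaluations $l\mapsto l(x)$ continuous); $\mathcal L\times\mathbb R$ has the product topology; $\operatorname{cl}$ denotes closure. For $f:X\to\mathbb R_{+\infty}$: $\operatorname{dom} f=\{x:f(x)<+\infty\}$; $f^*(l)=\sup_{x\in X}(l(x)-f(x))$; $\operatorname{epi} f^*=\{(l,r):f^*(l)\le r\}$. Infimal convolution: $(g_1\square\cdots\square g_m)(l)=\inf\{\sum_i g_i(l_i):l_i\in\mathcal L,\ \sum_i l_i=l\}$. For $\varepsilon\ge0$ and $x\in\operatorname{dom} f$, $\partial_\varepsilon f(x)=\{l\in\mathcal L: f(y)-f(x)-(l(y)-l(x))+\varepsilon\ge0\ \forall y\in X\}$, and $\emptyset$ if $x\notin\operatorname{dom} f$. Sums of sets are Minkowski sums. *)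

(* Defs.v *)
From Stdlib Require Import Reals Classical ClassicalEpsilon List.
Open Scope R_scope.

Inductive Rbar : Type := Finite (r : R) | p_infty | m_infty.

Definition Rbar_le (a b : Rbar) : Prop :=
  match a, b with
  | m_infty, _ => True
  | _, p_infty => True
  | Finite x, Finite y => x <= y
  | _, _ => False
  end.

Definition Rbar_lt (a b : Rbar) : Prop := Rbar_le a b /\ a <> b.

(* Addition; +oo is absorbing (the usual "upper" convention for
   infimal convolutions); it is only ever applied to values > -oo here. *)
Definition Rbar_plus (a b : Rbar) : Rbar :=
  match a, b with
  | p_infty, _ | _, p_infty => p_infty
  | m_infty, _ | _, m_infty => m_infty
  | Finite x, Finite y => Finite (x + y)
  end.

Definition R_minus_Rbar (r : R) (a : Rbar) : Rbar :=
  match a with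
  | Finite y => Finite (r - y)
  | p_infty => m_infty
  | m_infty => p_infty
  end.

Definition is_lub_Rbar (P : Rbar -> Prop) (s : Rbar) : Prop :=
  (forall v, P v -> Rbar_le v s) /\
  (forall b, (forall v, P v -> Rbar_le v b) -> Rbar_le s b).

Definition is_glb_Rbar (P : Rbar -> Prop) (s : Rbar) : Prop :=
  (forall v, P v -> Rbar_le s v) /\
  (forall b, (forall v, P v -> Rbar_le b v) -> Rbar_le b s).

Definition Rbar_sup (P : Rbar -> Prop) : Rbar :=
  epsilon (inhabits m_infty) (is_lub_Rbar P).
Definition Rbar_inf (P : Rbar -> Prop) : Rbar :=
  epsilon (inhabits p_infty) (is_glb_Rbar P).

Fixpoint Rbar_sumn (n : nat) (g : nat -> Rbar) : Rbar :=
  match n with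
  | O => Finite 0
  | S k => Rbar_plus (Rbar_sumn k g) (g k)
  end.

Fixpoint rsum (n : nat) (g : nat -> R) : R :=
  match n with
  | O => 0
  | S k => rsum k g + g k
  end.

Section Defs.
Context {X : Type}.

Definition fsum (n : nat) (l : nat -> X -> R) : X -> R :=
  fun x => rsum n (fun i => l i x).

Definition fsumbar (m : nat) (f : nat -> X -> Rbar) : X -> Rbar :=
  fun x => Rbar_sumn m (fun i => f i x).

Definition dom (g : X -> Rbar) (x : X) : Prop := g x <> p_infty.

Definition in_all_dom (m : nat) (f : nat -> X -> Rbar) (x : X) : Prop :=
  forall i, (i < m)%nat -> dom (f i) x.

Definition is_linear_family (L : (X -> R) -> Prop) : Prop :=
  (forall l1 l2, L l1 -> L l2 -> L (fun x => l1 x + l2 x)) /\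
  (forall (a : R) l, L l -> L (fun x => a * l x)).

Definition conj (g : X -> Rbar) (l : X -> R) : Rbar :=
  Rbar_sup (fun v => exists x, v = R_minus_Rbar (l x) (g x)).

Definition infconv (L : (X -> R) -> Prop) (m : nat)
  (g : nat -> (X -> R) -> Rbar) (l : X -> R) : Rbar :=
  Rbar_inf (fun v => exists li : nat -> X -> R,
     (forall i, (i < m)%nat -> L (li i)) /\
     (forall x, fsum m li x = l x) /\
     v = Rbar_sumn m (fun i => g i (li i))).

Definition epi_conj (L : (X -> R) -> Prop) (g : X -> Rbar) (p : (X -> R) * R)
  : Prop := L (fst p) /\ Rbar_le (conj g (fst p)) (Finite (snd p)).

(** ε-subdifferential (empty when x ∉ dom g) *)
Definition esubdiff (L : (X -> R) -> Prop) (g : X -> Rbar) (eps : R) (x : X)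
  (l : X -> R) : Prop :=
  L l /\ exists gx, g x = Finite gx /\
    forall y, Rbar_le (Finite (gx + (l y - l x) - eps)) (g y).

Definition msum (m : nat) (A : nat -> (X -> R) -> Prop) (l : X -> R) : Prop :=
  exists li : nat -> X -> R,
    (forall i, (i < m)%nat -> A i (li i)) /\ (forall x, l x = fsum m li x).

Definition msum2 (m : nat) (A : nat -> (X -> R) * R -> Prop)
  (p : (X -> R) * R) : Prop :=
  exists pi : nat -> (X -> R) * R,
    (forall i, (i < m)%nat -> A i (pi i)) /\
    (forall x, fst p x = fsum m (fun i => fst (pi i)) x) /\
    snd p = rsum m (fun i => snd (pi i)).

(** Pointwise-convergence topology on L: basic neighbourhoods of l are
    {l' ∈ L : |l'(x_j) - l(x_j)| < δ for all x_j ∈ xs}. *)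
Definition in_nbhd (xs : list X) (delta : R) (l l' : X -> R) : Prop :=
  forall x, In x xs -> Rabs (l' x - l x) < delta.

Definition closureL (L : (X -> R) -> Prop) (S : (X -> R) -> Prop)
  (l : X -> R) : Prop :=
  L l /\ forall (xs : list X) (delta : R), 0 < delta ->
    exists l', S l' /\ L l' /\ in_nbhd xs delta l l'.

Definition closureLR (L : (X -> R) -> Prop) (S : (X -> R) * R -> Prop)
  (p : (X -> R) * R) : Prop :=
  L (fst p) /\ forall (xs : list X) (delta : R), 0 < delta ->
    exists p', S p' /\ L (fst p') /\ in_nbhd xs delta (fst p) (fst p')
               /\ Rabs (snd p' - snd p) < delta.

Definition lsc_on (L : (X -> R) -> Prop) (h : (X -> R) -> Rbar) : Prop :=
  forall l, L l -> forall r : R, Rbar_lt (Finite r) (h l) ->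
    exists (xs : list X) (delta : R), 0 < delta /\
      forall l', L l' -> in_nbhd xs delta l l' -> Rbar_lt (Finite r) (h l').

Definition prop_i L m f : Prop :=
  exists K, 1 < K /\ forall x, in_all_dom m f x -> forall eps, 0 < eps ->
    forall l, esubdiff L (fsumbar m f) eps x l ->
      msum m (fun i => esubdiff L (f i) (K * eps) x) l.

Definition prop_ii L m f : Prop :=
  exists K, 0 < K /\ forall x, in_all_dom m f x -> forall eps, 0 < eps ->
    forall l, closureL L (msum m (fun i => esubdiff L (f i) eps x)) l ->
      msum m (fun i => esubdiff L (f i) (K * eps) x) l.

Definition union_sums L m f (s : R) (x : X) (l : X -> R) : Prop :=
  exists epsi : nat -> R, (forall i, (i < m)%nat -> 0 <= epsi i) /\
    rsum m epsi = s /\ msum m (fun i => esubdiff L (f i) (epsi i) x) l.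

Definition prop_iii L m f : Prop :=
  forall x eps, 0 <= eps -> forall l,
    esubdiff L (fsumbar m f) eps x l <->
    (forall eta, 0 < eta -> union_sums L m f (eps + eta) x l).

Definition prop_iv L m f : Prop :=
  forall l, L l -> conj (fsumbar m f) l = infconv L m (fun i => conj (f i)) l.

Definition prop_v L m f : Prop :=
  lsc_on L (infconv L m (fun i => conj (f i))).

Definition closed_formula L m f : Prop :=
  forall x, in_all_dom m f x -> forall eps, 0 <= eps -> forall l,
    esubdiff L (fsumbar m f) eps x l <->
    (forall eta, 0 < eta -> closureL L (union_sums L m f (eps + eta) x) l).

Definition epi_condition L m f : Prop :=
  forall p, closureLR L (msum2 m (fun i => epi_conj L (f i))) p <->
            epi_conj L (fsumbar m f) p.

End Defs.

(* Main.v *)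
Require Import Defs.
From Stdlib Require Import Reals Classical ClassicalEpsilon List Lra Lia FunctionalExtensionality.
Open Scope R_scope.

Lemma Rbar_le_refl a : Rbar_le a a.
Proof. destruct a; simpl; auto; lra. Qed.

Lemma Rbar_le_trans a b c : Rbar_le a b -> Rbar_le b c -> Rbar_le a c.
Proof. destruct a, b, c; simpl; auto; try tauto; lra. Qed.

Lemma Rbar_le_antisym a b : Rbar_le a b -> Rbar_le b a -> a = b.
Proof. destruct a, b; simpl; try tauto; intros; f_equal; lra. Qed.

Lemma Rbar_le_total a b : Rbar_le a b \/ Rbar_le b a.
Proof. destruct a, b; simpl; auto. lra. Qed.

Lemma Rbar_not_le a b : ~ Rbar_le a b -> Rbar_le b a.
Proof. intros H. destruct (Rbar_le_total a b); tauto. Qed.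

Lemma Rbar_lt_not_le a b : Rbar_lt a b <-> ~ Rbar_le b a.
Proof.
  unfold Rbar_lt. split.
  - intros [H1 H2] H3. apply H2, Rbar_le_antisym; auto.
  - intros H. split. apply Rbar_not_le; auto. intros ->. apply H, Rbar_le_refl.
Qed.

Lemma lub_ex (P : Rbar -> Prop) : exists s, is_lub_Rbar P s.
Proof.
  destruct (classic (P p_infty)) as [Hp|Hp].
  { exists p_infty. split. intros v _; destruct v; simpl; auto.
    intros b Hb. apply Hb; auto. }
  destruct (classic (exists r, P (Finite r))) as [[r0 Hr0]|Hn].
  - destruct (classic (exists M, forall r, P (Finite r) -> r <= M)) as [[M HM]|HU].
    + destruct (completeness (fun r => P (Finite r))) as [c [Hc1 Hc2]].
      { exists M. intros r Hr. apply HM; auto. }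
      { exists r0; auto. }
      exists (Finite c). split.
      * intros v Hv. destruct v; simpl; auto; try tauto; apply Hc1; auto.
      * intros b Hb. destruct b; simpl.
        -- apply Hc2. intros r1 Hr1. specialize (Hb _ Hr1). simpl in Hb. auto.
        -- auto.
        -- specialize (Hb _ Hr0). simpl in Hb. auto.
    + exists p_infty. split. intros v _; destruct v; simpl; auto.
      intros b Hb. destruct b; simpl; auto.
      * exfalso. apply HU. exists r. intros r' Hr'. specialize (Hb _ Hr'). exact Hb.
      * specialize (Hb _ Hr0). simpl in Hb. auto.
  - exists m_infty. split.
    + intros v Hv. destruct v; simpl; auto. apply Hn; eauto.
    + intros b _. simpl; auto.
Qed.

Lemma glb_ex (P : Rbar -> Prop) : exists s, is_glb_Rbar P s.
Proof.
  destruct (classic (P m_infty)) as [Hp|Hp].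
  { exists m_infty. split. intros v _; destruct v; simpl; auto.
    intros b Hb. apply Hb; auto. }
  destruct (classic (exists r, P (Finite r))) as [[r0 Hr0]|Hn].
  - destruct (classic (exists M, forall r, P (Finite r) -> M <= r)) as [[M HM]|HU].
    + destruct (completeness (fun r => P (Finite (- r)))) as [c [Hc1 Hc2]].
      { exists (- M). intros r Hr. specialize (HM _ Hr). lra. }
      { exists (- r0). rewrite Ropp_involutive; auto. }
      exists (Finite (- c)). split.
      * intros v Hv. destruct v; simpl; auto; try tauto.
        assert (- r <= c). { apply Hc1. rewrite Ropp_involutive; auto. } lra.
      * intros b Hb. destruct b; simpl.
        -- assert (c <= - r); [|lra]. apply Hc2. intros r' Hr'. specialize (Hb _ Hr'). simpl in Hb. lra.
        -- specialize (Hb _ Hr0). simpl in Hb. auto.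
        -- auto.
    + exists m_infty. split. intros v _; destruct v; simpl; auto.
      intros b Hb. destruct b; simpl; auto.
      * exfalso. apply HU. exists r. intros r' Hr'. specialize (Hb _ Hr'). exact Hb.
      * specialize (Hb _ Hr0). simpl in Hb. auto.
  - exists p_infty. split.
    + intros v Hv. destruct v; simpl; auto. apply Hn; eauto.
    + intros b _. destruct b; simpl; auto.
Qed.

Lemma sup_spec P : is_lub_Rbar P (Rbar_sup P).
Proof. unfold Rbar_sup. apply epsilon_spec. apply lub_ex. Qed.
Lemma inf_spec P : is_glb_Rbar P (Rbar_inf P).
Proof. unfold Rbar_inf. apply epsilon_spec. apply glb_ex. Qed.

Definition rb (a : Rbar) : R := match a with Finite r => r | _ => 0 end.

Lemma Rbar_plus_le a b c d : Rbar_le a c -> Rbar_le b d -> Rbar_le (Rbar_plus a b) (Rbar_plus c d).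
Proof. destruct a, b, c, d; simpl; auto; try tauto; lra. Qed.

Lemma sumn_le n a b : (forall i, (i < n)%nat -> Rbar_le (a i) (b i)) ->
  Rbar_le (Rbar_sumn n a) (Rbar_sumn n b).
Proof.
  induction n; intros H; simpl. lra.
  apply Rbar_plus_le. apply IHn; intros; apply H; lia. apply H; lia.
Qed.

Lemma sumn_Finite n g h : (forall i, (i < n)%nat -> g i = Finite (h i)) ->
  Rbar_sumn n g = Finite (rsum n h).
Proof.
  induction n; intros H; simpl; auto.
  rewrite IHn by (intros; apply H; lia). rewrite H by lia. reflexivity.
Qed.

Lemma sumn_not_minf n g : (forall i, (i < n)%nat -> g i <> m_infty) -> Rbar_sumn n g <> m_infty.
Proof.
  induction n; intros H; simpl. discriminate.
  assert (H1 := IHn (fun i Hi => H i ltac:(lia))). assert (H2 := H n ltac:(lia)).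
  destruct (Rbar_sumn n g), (g n); simpl; congruence.
Qed.

Lemma sumn_fin n g : (forall i, (i < n)%nat -> g i <> m_infty) -> Rbar_sumn n g <> p_infty ->
  forall i, (i < n)%nat -> g i = Finite (rb (g i)).
Proof.
  induction n; intros H Hp i Hi. lia.
  simpl in Hp.
  assert (H1 := sumn_not_minf n g (fun i Hi => H i ltac:(lia))). assert (H2 := H n ltac:(lia)).
  assert (Hs : Rbar_sumn n g <> p_infty) by (destruct (Rbar_sumn n g), (g n); simpl in *; congruence).
  destruct (Nat.eq_dec i n) as [->|Hne].
  - destruct (Rbar_sumn n g), (g n); simpl in *; congruence.
  - apply IHn; [intros; apply H; lia | auto | lia].
Qed.

Lemma minus_sumn n a g : (forall i, (i < n)%nat -> g i <> m_infty) ->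
  R_minus_Rbar (rsum n a) (Rbar_sumn n g) = Rbar_sumn n (fun i => R_minus_Rbar (a i) (g i)).
Proof.
  induction n; intros H; simpl. f_equal; ring.
  rewrite <- IHn by (intros; apply H; lia).
  assert (H1 := sumn_not_minf n g (fun i Hi => H i ltac:(lia))). assert (H2 := H n ltac:(lia)).
  destruct (Rbar_sumn n g), (g n); simpl in *; try congruence. f_equal; ring.
Qed.

Lemma rsum_ext n a b : (forall i, (i < n)%nat -> a i = b i) -> rsum n a = rsum n b.
Proof. induction n; intros H; simpl; auto. rewrite IHn, H; auto; intros; apply H; lia. Qed.

Lemma rsum_plus n a b : rsum n (fun i => a i + b i) = rsum n a + rsum n b.
Proof. induction n; simpl. ring. rewrite IHn; ring. Qed.

Lemma rsum_minus n a b : rsum n (fun i => a i - b i) = rsum n a - rsum n b.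
Proof. induction n; simpl. ring. rewrite IHn; ring. Qed.

Lemma rsum_le n a b : (forall i, (i < n)%nat -> a i <= b i) -> rsum n a <= rsum n b.
Proof. induction n; intros H; simpl. lra. assert (H1 := H n ltac:(lia)).
  assert (rsum n a <= rsum n b) by (apply IHn; intros; apply H; lia). lra. Qed.

Lemma rsum_nonneg n a : (forall i, (i < n)%nat -> 0 <= a i) -> 0 <= rsum n a.
Proof. induction n; intros H; simpl. lra. assert (H1 := H n ltac:(lia)).
  assert (0 <= rsum n a) by (apply IHn; intros; apply H; lia). lra. Qed.

Lemma rsum_nonneg_le n a j : (forall i, (i < n)%nat -> 0 <= a i) -> (j < n)%nat -> a j <= rsum n a.
Proof. induction n; intros H Hj; simpl. lia.
  assert (H1 := H n ltac:(lia)).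
  assert (0 <= rsum n a) by (apply rsum_nonneg; intros; apply H; lia).
  destruct (Nat.eq_dec j n) as [->|]. lra.
  assert (a j <= rsum n a) by (apply IHn; [intros; apply H; lia| lia]). lra. Qed.

Lemma rsum_const n c : rsum n (fun _ => c) = INR n * c.
Proof. induction n. simpl. ring. rewrite S_INR. simpl. rewrite IHn. ring. Qed.

Lemma rsum_bump n e d : (0 < n)%nat ->
  rsum n (fun i => e i + (if Nat.eq_dec i 0 then d else 0)) = rsum n e + d.
Proof.
  induction n; intros Hn. lia. simpl.
  destruct n. simpl. destruct (Nat.eq_dec 0 0); [ring|congruence].
  rewrite IHn by lia. destruct (Nat.eq_dec (S n) 0). lia. ring.
Qed.

Lemma conj_ge {X} (g : X -> Rbar) l x : Rbar_le (R_minus_Rbar (l x) (g x)) (conj g l).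
Proof. apply (proj1 (sup_spec _)). eauto. Qed.

Lemma conj_le {X} (g : X -> Rbar) l b :
  (forall x, Rbar_le (R_minus_Rbar (l x) (g x)) b) -> Rbar_le (conj g l) b.
Proof. intros H. apply (proj2 (sup_spec _)). intros v [x ->]. auto. Qed.

Lemma esub_iff {X} L (g : X -> Rbar) eps x l : (forall y, g y <> m_infty) ->
  esubdiff L g eps x l <-> L l /\ exists gx, g x = Finite gx /\
     Rbar_le (conj g l) (Finite (l x - gx + eps)).
Proof.
  intros Hg. split.
  - intros [HL [gx [Hx Hy]]]. split; auto. exists gx. split; auto.
    apply conj_le. intros y. specialize (Hy y). specialize (Hg y).
    destruct (g y); simpl in *; auto; try congruence. lra.
  - intros [HL [gx [Hx Hc]]]. split; auto. exists gx. split; auto.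
    intros y. assert (H := Rbar_le_trans _ _ _ (conj_ge g l y) Hc). specialize (Hg y).
    destruct (g y); simpl in *; auto; try congruence. lra.
Qed.

Lemma esub_mono {X} L (g : X -> Rbar) e e' x l : e <= e' -> esubdiff L g e x l -> esubdiff L g e' x l.
Proof.
  intros He [HL [gx [Hx Hy]]]. split; auto. exists gx; split; auto.
  intros y. eapply Rbar_le_trans; [|apply Hy]. simpl. lra.
Qed.

Lemma esub_closed {X} L (g : X -> Rbar) e x l :
  (forall eta, 0 < eta -> esubdiff L g (e + eta) x l) -> esubdiff L g e x l.
Proof.
  intros H. destruct (H 1 ltac:(lra)) as [HL [gx [Hx _]]]. split; auto. exists gx; split; auto.
  intros y. destruct (g y) eqn:E; simpl; auto.
  - apply Rnot_lt_le. intros Hlt.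
    destruct (H ((gx + (l y - l x) - e - r)/2) ltac:(lra)) as [_ [gx' [Hx' Hy']]].
    rewrite Hx in Hx'. injection Hx' as <-. specialize (Hy' y). rewrite E in Hy'. simpl in Hy'. lra.
  - destruct (H 1 ltac:(lra)) as [_ [gx' [Hx' Hy']]]. specialize (Hy' y). rewrite E in Hy'. simpl in Hy'. auto.
Qed.


Lemma F_not_minf {X} m (f : nat -> X -> Rbar) :
  (forall i x, (i < m)%nat -> f i x <> m_infty) -> forall y, fsumbar m f y <> m_infty.
Proof. intros Hf y. apply sumn_not_minf. intros; apply Hf; auto. Qed.

Lemma dom_fin {X} m (f : nat -> X -> Rbar) x :
  (forall i x, (i < m)%nat -> f i x <> m_infty) -> in_all_dom m f x ->
  forall i, (i < m)%nat -> f i x = Finite (rb (f i x)).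
Proof. intros Hf Hd i Hi. specialize (Hd i Hi). specialize (Hf i x Hi). unfold dom in Hd.
  destruct (f i x); simpl; congruence. Qed.

Lemma dom_F {X} m (f : nat -> X -> Rbar) x :
  (forall i x, (i < m)%nat -> f i x <> m_infty) -> in_all_dom m f x ->
  fsumbar m f x = Finite (rsum m (fun i => rb (f i x))).
Proof. intros Hf Hd. apply sumn_Finite. intros; apply (dom_fin m f x Hf Hd); auto. Qed.

Lemma F_dom {X} m (f : nat -> X -> Rbar) x :
  (forall i x, (i < m)%nat -> f i x <> m_infty) -> fsumbar m f x <> p_infty -> in_all_dom m f x.
Proof. intros Hf Hp i Hi. unfold dom. rewrite (sumn_fin m (fun i => f i x)); auto. discriminate.
Qed.

Lemma conj_sum {X} m (f : nat -> X -> Rbar) l li :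
  (forall i x, (i < m)%nat -> f i x <> m_infty) -> (forall x, fsum m li x = l x) ->
  Rbar_le (conj (fsumbar m f) l) (Rbar_sumn m (fun i => conj (f i) (li i))).
Proof.
  intros Hf Hl. apply conj_le. intros x. rewrite <- Hl. unfold fsum, fsumbar.
  rewrite minus_sumn by (intros; apply Hf; auto).
  apply sumn_le. intros i Hi. apply conj_ge.
Qed.

Lemma conj_not_minf {X} m (f : nat -> X -> Rbar) l i :
  (forall i x, (i < m)%nat -> f i x <> m_infty) -> (exists x, in_all_dom m f x) -> (i < m)%nat ->
  conj (f i) l <> m_infty.
Proof.
  intros Hf [x Hx] Hi E. assert (H := conj_ge (f i) l x). rewrite E in H.
  rewrite (dom_fin m f x Hf Hx i Hi) in H. simpl in H. auto.
Qed.

Lemma conjF_not_minf {X} m (f : nat -> X -> Rbar) l :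
  (forall i x, (i < m)%nat -> f i x <> m_infty) -> (exists x, in_all_dom m f x) ->
  conj (fsumbar m f) l <> m_infty.
Proof.
  intros Hf [x Hx] E. assert (H := conj_ge (fsumbar m f) l x). rewrite E in H.
  rewrite (dom_F m f x Hf Hx) in H. simpl in H. auto.
Qed.

Lemma conj_le_inf {X} L m (f : nat -> X -> Rbar) l :
  (forall i x, (i < m)%nat -> f i x <> m_infty) ->
  Rbar_le (conj (fsumbar m f) l) (infconv L m (fun i => conj (f i)) l).
Proof.
  intros Hf. apply (proj2 (inf_spec _)). intros v [li [_ [Hs ->]]]. apply conj_sum; auto.
Qed.

Lemma inf_approx P c eta : Rbar_le (Rbar_inf P) (Finite c) -> 0 < eta ->
  exists v, P v /\ Rbar_le v (Finite (c + eta)).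
Proof.
  intros H He. apply NNPP. intros Hn.
  assert (Rbar_le (Finite (c + eta)) (Rbar_inf P)).
  { apply (proj2 (inf_spec P)). intros v Hv. apply Rbar_not_le. intros Hle. apply Hn. eauto. }
  assert (Hc := Rbar_le_trans _ _ _ H0 H). simpl in Hc. lra.
Qed.

Lemma le_from_eps v c M : 0 < M -> (forall d, 0 < d -> Rbar_le v (Finite (c + M * d))) ->
  Rbar_le v (Finite c).
Proof.
  intros HM H. destruct v; simpl.
  - apply Rnot_lt_le. intros Hlt. specialize (H ((r - c) / (2 * M))).
    assert (0 < (r - c) / (2 * M)) by (apply Rdiv_lt_0_compat; lra).
    specialize (H H0). simpl in H.
    assert (M * ((r - c) / (2 * M)) = (r - c) / 2) by (field; lra). lra.
  - specialize (H 1 ltac:(lra)). simpl in H. auto.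
  - auto.
Qed.

Lemma L_fsum {X} (L : (X -> R) -> Prop) n li : is_linear_family L -> (0 < n)%nat ->
  (forall i, (i < n)%nat -> L (li i)) -> L (fun x => fsum n li x).
Proof.
  intros [Hp Hs] Hn Hli.
  assert (H0 : L (fun _ => 0)).
  { assert (E : (fun _ : X => 0) = (fun x => 0 * li 0%nat x)).
    { apply functional_extensionality; intros; ring. }
    rewrite E. apply Hs. apply Hli. auto. }
  clear Hn. induction n. exact H0.
  unfold fsum; simpl. apply Hp. apply IHn. intros; apply Hli; lia. apply Hli; lia.
Qed.

Lemma L_msum {X} (L : (X -> R) -> Prop) n li l : is_linear_family L -> (0 < n)%nat ->
  (forall i, (i < n)%nat -> L (li i)) -> (forall x, l x = fsum n li x) -> L l.
Proof.
  intros. replace l with (fun x => fsum n li x). apply L_fsum; auto.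
  apply functional_extensionality; intros; auto.
Qed.

Lemma msum_dom {X} L m (f : nat -> X -> Rbar) e x l :
  msum m (fun i => esubdiff L (f i) (e i) x) l -> in_all_dom m f x.
Proof.
  intros [li [H _]] i Hi. destruct (H i Hi) as [_ [gx [Hx _]]]. unfold dom. rewrite Hx; discriminate.
Qed.

Lemma sumn_esub_bound {X} L m (f : nat -> X -> Rbar) e x li :
  (forall i x, (i < m)%nat -> f i x <> m_infty) ->
  (forall i, (i < m)%nat -> esubdiff L (f i) (e i) x (li i)) ->
  Rbar_le (Rbar_sumn m (fun i => conj (f i) (li i)))
    (Finite (fsum m li x - rsum m (fun i => rb (f i x)) + rsum m e)).
Proof.
  intros Hf H.
  eapply Rbar_le_trans.
  - apply sumn_le with (b := fun i => Finite (li i x - rb (f i x) + e i)).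
    intros i Hi. destruct (proj1 (esub_iff L (f i) (e i) x (li i) (fun y => Hf i y Hi)) (H i Hi))
      as [_ [gx [Hx Hc]]]. rewrite Hx. simpl. exact Hc.
  - rewrite (sumn_Finite _ _ (fun i => li i x - rb (f i x) + e i)) by auto.
    simpl. rewrite rsum_plus, rsum_minus. unfold fsum. lra.
Qed.

Lemma gen_bound {X} L m (f : nat -> X -> Rbar) e x l :
  (forall i x, (i < m)%nat -> f i x <> m_infty) ->
  msum m (fun i => esubdiff L (f i) (e i) x) l ->
  Rbar_le (infconv L m (fun i => conj (f i)) l)
    (Finite (l x - rsum m (fun i => rb (f i x)) + rsum m e)).
Proof.
  intros Hf [li [H Hl]].
  apply Rbar_le_trans with (Rbar_sumn m (fun i => conj (f i) (li i))).
  - unfold infconv. apply (proj1 (inf_spec _)). exists li. split; [|split].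
    + intros i Hi. apply (H i Hi).
    + intros y. rewrite Hl. auto.
    + reflexivity.
  - rewrite Hl. apply (sumn_esub_bound L); auto.
Qed.

Lemma sum_rule {X} L m (f : nat -> X -> Rbar) e x l :
  (forall i x, (i < m)%nat -> f i x <> m_infty) -> L l ->
  msum m (fun i => esubdiff L (f i) (e i) x) l ->
  esubdiff L (fsumbar m f) (rsum m e) x l.
Proof.
  intros Hf HLl Hm.
  assert (Hd := msum_dom L m f e x l Hm).
  destruct Hm as [li [H Hl]].
  apply esub_iff. apply F_not_minf; auto.
  split; auto. exists (rsum m (fun i => rb (f i x))). split. apply dom_F; auto.
  eapply Rbar_le_trans. apply (conj_sum m f l li Hf). intros y; rewrite Hl; auto.
  rewrite Hl. apply (sumn_esub_bound L); auto.
Qed.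

Lemma decomp {X} L m (f : nat -> X -> Rbar) x li s :
  (forall i x, (i < m)%nat -> f i x <> m_infty) -> in_all_dom m f x ->
  (forall i, (i < m)%nat -> L (li i)) ->
  Rbar_le (Rbar_sumn m (fun i => conj (f i) (li i)))
    (Finite (fsum m li x - rsum m (fun i => rb (f i x)) + s)) ->
  exists e, (forall i, (i < m)%nat -> 0 <= e i) /\ rsum m e <= s /\
    (forall i, (i < m)%nat -> esubdiff L (f i) (e i) x (li i)).
Proof.
  intros Hf Hd HL Hle.
  assert (Hnm : forall i, (i < m)%nat -> conj (f i) (li i) <> m_infty).
  { intros. apply (conj_not_minf m); eauto. }
  assert (Hnp : Rbar_sumn m (fun i => conj (f i) (li i)) <> p_infty).
  { intros E; rewrite E in Hle; simpl in Hle; auto. }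
  assert (Hc := sumn_fin m _ Hnm Hnp). simpl in Hc.
  set (c i := rb (conj (f i) (li i))) in *.
  exists (fun i => c i - (li i x - rb (f i x))). split; [|split].
  - intros i Hi. assert (H := conj_ge (f i) (li i) x).
    rewrite (Hc i Hi), (dom_fin m f x Hf Hd i Hi) in H. simpl in H. unfold c. lra.
  - rewrite (sumn_Finite _ _ c Hc) in Hle. simpl in Hle.
    rewrite rsum_minus, rsum_minus. unfold fsum in Hle. unfold c in *. lra.
  - intros i Hi. apply esub_iff. intros; apply Hf; auto. split; auto.
    exists (rb (f i x)). split. apply (dom_fin m f x Hf Hd i Hi).
    rewrite (Hc i Hi). simpl. unfold c. lra.
Qed.

Lemma bump {X} L m (f : nat -> X -> Rbar) x li e s : (0 < m)%nat ->
  (forall i, (i < m)%nat -> 0 <= e i) -> rsum m e <= s ->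
  (forall i, (i < m)%nat -> esubdiff L (f i) (e i) x (li i)) ->
  exists e', (forall i, (i < m)%nat -> 0 <= e' i) /\ rsum m e' = s /\
    (forall i, (i < m)%nat -> esubdiff L (f i) (e' i) x (li i)).
Proof.
  intros Hm He Hs H.
  exists (fun i => e i + (if Nat.eq_dec i 0 then s - rsum m e else 0)). split; [|split].
  - intros i Hi. specialize (He i Hi). destruct (Nat.eq_dec i 0); lra.
  - rewrite rsum_bump; auto. ring.
  - intros i Hi. eapply esub_mono; [|apply H; auto]. destruct (Nat.eq_dec i 0); lra.
Qed.

Lemma lt_point {X} (g : X -> Rbar) l r : (forall y, g y <> m_infty) ->
  ~ Rbar_le (conj g l) (Finite r) -> exists x a, g x = Finite a /\ r < l x - a.
Proof.
  intros Hg H. apply NNPP. intros Hn. apply H. apply conj_le. intros y.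
  specialize (Hg y). destruct (g y) eqn:E; simpl; auto; try congruence.
  apply Rnot_lt_le. intros Hlt. apply Hn. exists y, r0. auto.
Qed.

Lemma approx_point {X} (g : X -> Rbar) l c d : (forall y, g y <> m_infty) ->
  conj g l = Finite c -> 0 < d -> exists x a, g x = Finite a /\ c - d < l x - a.
Proof.
  intros Hg E Hd. apply lt_point; auto. rewrite E. simpl. lra.
Qed.

Lemma rabs_lt a b d : Rabs (a - b) < d -> b - d < a < b + d.
Proof. intros H. apply Rabs_def2 in H. lra. Qed.

Section Main.
End Main.

Lemma i_iv {X} L m (f : nat -> X -> Rbar) :
  (forall i x, (i < m)%nat -> f i x <> m_infty) -> (exists x, in_all_dom m f x) ->
  prop_i L m f -> prop_iv L m f.
Proof.
  intros Hf Hdom [K [HK Hi]] l Hl.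
  apply Rbar_le_antisym. apply conj_le_inf; auto.
  destruct (conj (fsumbar m f) l) eqn:E.
  - assert (HM : 0 < 1 + INR m * K) by (assert (0 <= INR m) by apply pos_INR; nra).
    apply (le_from_eps _ _ _ HM). intros d Hd.
    destruct (approx_point _ _ _ _ (F_not_minf m f Hf) E Hd) as [x [a [Hx Hlt]]].
    assert (Hdx : in_all_dom m f x) by (apply (F_dom m f x Hf); rewrite Hx; discriminate).
    assert (Ha : a = rsum m (fun i => rb (f i x))).
    { rewrite (dom_F m f x Hf Hdx) in Hx. injection Hx; auto. }
    assert (Hc := conj_ge (fsumbar m f) l x). rewrite E, Hx in Hc. simpl in Hc.
    assert (Hs : esubdiff L (fsumbar m f) d x l).
    { apply esub_iff. apply F_not_minf; auto. split; auto. exists a. split; auto. rewrite E. simpl. lra. }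
    specialize (Hi x Hdx d Hd l Hs).
    eapply Rbar_le_trans. apply (gen_bound L m f (fun _ => K * d) x l Hf Hi).
    simpl. rewrite rsum_const. rewrite <- Ha. nra.
  - destruct (infconv _ _ _ _); simpl; auto.
  - exfalso. apply (conjF_not_minf m f l Hf Hdom E).
Qed.

Lemma iii_back {X} L m (f : nat -> X -> Rbar) x eps l :
  is_linear_family L -> (0 < m)%nat ->
  (forall i x, (i < m)%nat -> f i x <> m_infty) ->
  (forall eta, 0 < eta -> union_sums L m f (eps + eta) x l) ->
  esubdiff L (fsumbar m f) eps x l.
Proof.
  intros HL Hm Hf H. apply esub_closed. intros eta Heta.
  destruct (H eta Heta) as [e [He [Hse Hms]]]. rewrite <- Hse.
  apply sum_rule; auto.
  destruct Hms as [li [Hli Hl]]. apply (L_msum L m li l HL Hm); auto.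
  intros i Hi. apply (Hli i Hi).
Qed.

Lemma iv_iii {X} L m (f : nat -> X -> Rbar) :
  is_linear_family L -> (0 < m)%nat ->
  (forall i x, (i < m)%nat -> f i x <> m_infty) -> (exists x, in_all_dom m f x) ->
  prop_iv L m f -> prop_iii L m f.
Proof.
  intros HL Hm Hf Hdom Hiv x eps Heps l. split.
  - intros Hs eta Heta.
    destruct (proj1 (esub_iff L _ eps x l (F_not_minf m f Hf)) Hs) as [Hl [a [Hx Hc]]].
    assert (Hdx : in_all_dom m f x) by (apply (F_dom m f x Hf); rewrite Hx; discriminate).
    assert (Ha : a = rsum m (fun i => rb (f i x))).
    { rewrite (dom_F m f x Hf Hdx) in Hx. injection Hx; auto. }
    rewrite (Hiv l Hl) in Hc.
    destruct (inf_approx _ _ (eta / 2) Hc ltac:(lra)) as [v [[li [Hli [Hsum ->]]] Hv]].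
    destruct (decomp L m f x li (eps + eta / 2) Hf Hdx Hli) as [e [He [Hse Hes]]].
    { rewrite Hsum, <- Ha. eapply Rbar_le_trans; [apply Hv|]. simpl. lra. }
    destruct (bump L m f x li e (eps + eta) Hm He ltac:(lra) Hes) as [e' [He' [Hse' Hes']]].
    exists e'. split; auto. split; auto. exists li. split; auto.
  - apply iii_back; auto.
Qed.

Lemma iii_iv {X} L m (f : nat -> X -> Rbar) :
  (forall i x, (i < m)%nat -> f i x <> m_infty) -> (exists x, in_all_dom m f x) ->
  prop_iii L m f -> prop_iv L m f.
Proof.
  intros Hf Hdom Hiii l Hl.
  apply Rbar_le_antisym. apply conj_le_inf; auto.
  destruct (conj (fsumbar m f) l) eqn:E.
  - apply (le_from_eps _ _ 1 ltac:(lra)). intros d Hd.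
    destruct (approx_point _ _ _ (d/2) (F_not_minf m f Hf) E ltac:(lra)) as [x [a [Hx Hlt]]].
    assert (Hdx : in_all_dom m f x) by (apply (F_dom m f x Hf); rewrite Hx; discriminate).
    assert (Ha : a = rsum m (fun i => rb (f i x))).
    { rewrite (dom_F m f x Hf Hdx) in Hx. injection Hx; auto. }
    assert (Hc := conj_ge (fsumbar m f) l x). rewrite E, Hx in Hc. simpl in Hc.
    assert (Hs : esubdiff L (fsumbar m f) (d/2) x l).
    { apply esub_iff. apply F_not_minf; auto. split; auto. exists a. split; auto. rewrite E. simpl. lra. }
    destruct (proj1 (Hiii x (d/2) ltac:(lra) l) Hs (d/2) ltac:(lra)) as [e [He [Hse Hms]]].
    eapply Rbar_le_trans. apply (gen_bound L m f e x l Hf Hms).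
    simpl. rewrite Hse, <- Ha. lra.
  - destruct (infconv _ _ _ _); simpl; auto.
  - exfalso. apply (conjF_not_minf m f l Hf Hdom E).
Qed.

Lemma iii_i {X} L m (f : nat -> X -> Rbar) :
  prop_iii L m f -> prop_i L m f.
Proof.
  intros Hiii. exists 2. split. lra. intros x Hdx eps Heps l Hs.
  destruct (proj1 (Hiii x eps ltac:(lra) l) Hs eps Heps) as [e [He [Hse [li [Hli Hl]]]]].
  exists li. split; auto. intros i Hi. eapply esub_mono; [|apply Hli; auto].
  assert (H := rsum_nonneg_le m e i He Hi). lra.
Qed.

Lemma iv_v {X} L m (f : nat -> X -> Rbar) :
  (forall i x, (i < m)%nat -> f i x <> m_infty) ->
  prop_iv L m f -> prop_v L m f.
Proof.
  intros Hf Hiv l Hl r Hr. rewrite <- (Hiv l Hl) in Hr.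
  apply Rbar_lt_not_le in Hr.
  destruct (lt_point _ _ _ (F_not_minf m f Hf) Hr) as [x [a [Hx Hlt]]].
  exists (x :: nil), (l x - a - r). split. lra.
  intros l' Hl' Hn. rewrite <- (Hiv l' Hl'). apply Rbar_lt_not_le. intros Hle.
  assert (Hc := conj_ge (fsumbar m f) l' x). rewrite Hx in Hc.
  assert (H := Rbar_le_trans _ _ _ Hc Hle). simpl in H.
  specialize (Hn x (or_introl eq_refl)). apply rabs_lt in Hn. lra.
Qed.

Lemma Rmin_lt a b c : c < Rmin a b -> c < a /\ c < b.
Proof. unfold Rmin. destruct (Rle_dec a b); lra. Qed.

Lemma Rmin_pos a b : 0 < a -> 0 < b -> 0 < Rmin a b.
Proof. unfold Rmin. destruct (Rle_dec a b); lra. Qed.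

Lemma nbhd_cons {X} (x : X) xs d d' l l' : d' <= d -> in_nbhd (x :: xs) d' l l' ->
  in_nbhd xs d l l' /\ Rabs (l' x - l x) < d'.
Proof.
  intros Hd H. split.
  - intros y Hy. specialize (H y (or_intror Hy)). lra.
  - apply H. left; auto.
Qed.

Lemma v_ii {X} L m (f : nat -> X -> Rbar) :
  (forall i x, (i < m)%nat -> f i x <> m_infty) ->
  prop_v L m f -> prop_ii L m f.
Proof.
  intros Hf Hv. exists (INR m + 1). split.
  { assert (0 <= INR m) by apply pos_INR. lra. }
  intros x Hdx eps Heps l [Hl Hcl].
  set (a := rsum m (fun i => rb (f i x))).
  set (r := l x - a + INR m * eps + eps / 2).
  assert (Hb : Rbar_le (infconv L m (fun i => conj (f i)) l) (Finite r)).
  { destruct (classic (Rbar_le (infconv L m (fun i => conj (f i)) l) (Finite r))) as [H|Hn]; auto.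
    exfalso.
    apply Rbar_lt_not_le in Hn.
    destruct (Hv l Hl r Hn) as [xs [d [Hd Hnb]]].
    destruct (Hcl (x :: xs) (Rmin d (eps / 2)) (Rmin_pos d (eps / 2) Hd ltac:(lra))) as [l' [Hs [Hl' Hn']]].
    assert (Hmd : Rmin d (eps/2) <= d) by apply Rmin_l.
    assert (Hme : Rmin d (eps/2) <= eps/2) by apply Rmin_r.
    destruct (nbhd_cons x xs d _ l l' Hmd Hn') as [Hn1 Hn2].
    specialize (Hnb l' Hl' Hn1). apply Rbar_lt_not_le in Hnb. apply Hnb.
    eapply Rbar_le_trans. apply (gen_bound L m f (fun _ => eps) x l' Hf Hs).
    simpl. rewrite rsum_const. fold a. apply rabs_lt in Hn2. unfold r. lra. }
  destruct (inf_approx _ _ (eps / 2) Hb ltac:(lra)) as [v [[li [Hli [Hsum ->]]] Hv']].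
  destruct (decomp L m f x li (INR m * eps + eps) Hf Hdx Hli) as [e [He [Hse Hes]]].
  { rewrite Hsum. fold a. eapply Rbar_le_trans; [apply Hv'|]. simpl. unfold r. lra. }
  exists li. split; [|intros y; rewrite Hsum; auto].
  intros i Hi. eapply esub_mono; [|apply Hes; auto].
  assert (H := rsum_nonneg_le m e i He Hi). lra.
Qed.

Lemma closureL_mono {X} L (A B : (X -> R) -> Prop) l :
  (forall l, A l -> B l) -> closureL L A l -> closureL L B l.
Proof.
  intros H [Hl Hc]. split; auto. intros xs d Hd. destruct (Hc xs d Hd) as [l' [H1 [H2 H3]]].
  exists l'. auto.
Qed.

Lemma ii_i {X} L m (f : nat -> X -> Rbar) :
  closed_formula L m f -> prop_ii L m f -> prop_i L m f.
Proof.
  intros Hcf [K [HK Hii]]. exists (2 * K + 1). split. lra.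
  intros x Hdx eps Heps l Hs.
  assert (Hc := proj1 (Hcf x Hdx eps ltac:(lra) l) Hs eps Heps).
  assert (Hc' : closureL L (msum m (fun i => esubdiff L (f i) (eps + eps) x)) l).
  { eapply closureL_mono; [|apply Hc]. intros l0 [e [He [Hse [li [Hli Hl]]]]].
    exists li. split; auto. intros i Hi. eapply esub_mono; [|apply Hli; auto].
    assert (H := rsum_nonneg_le m e i He Hi). lra. }
  destruct (Hii x Hdx (eps + eps) ltac:(lra) l Hc') as [li [Hli Hl]].
  exists li. split; auto. intros i Hi. eapply esub_mono; [|apply Hli; auto]. nra.
Qed.

Lemma closure_esub {X} L m (f : nat -> X -> Rbar) x s l :
  is_linear_family L -> (0 < m)%nat ->
  (forall i x, (i < m)%nat -> f i x <> m_infty) -> in_all_dom m f x ->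
  closureL L (union_sums L m f s x) l -> esubdiff L (fsumbar m f) s x l.
Proof.
  intros HL Hm Hf Hdx [Hl Hcl].
  set (a := rsum m (fun i => rb (f i x))).
  split; auto. exists a. split. apply dom_F; auto.
  intros y. destruct (fsumbar m f y) eqn:E; simpl; auto.
  - apply Rnot_lt_le. intros Hlt.
    set (g := a + (l y - l x) - s - r).
    destruct (Hcl (x :: y :: nil) (g / 3) ltac:(unfold g; lra)) as [l' [[e [He [Hse Hms]]] [Hl' Hn]]].
    assert (Hes := sum_rule L m f e x l' Hf Hl' Hms). rewrite Hse in Hes.
    destruct Hes as [_ [gx [Hx Hy]]]. rewrite dom_F in Hx by auto. injection Hx as <-.
    specialize (Hy y). rewrite E in Hy. simpl in Hy. fold a in Hy.
    assert (H1 := Hn x (or_introl eq_refl)). assert (H2 := Hn y (or_intror (or_introl eq_refl))).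
    apply rabs_lt in H1. apply rabs_lt in H2. unfold g in *. lra.
  - exfalso. apply (F_not_minf m f Hf y E).
Qed.

Lemma epi_cf {X} L m (f : nat -> X -> Rbar) :
  is_linear_family L -> (0 < m)%nat ->
  (forall i x, (i < m)%nat -> f i x <> m_infty) -> (exists x, in_all_dom m f x) ->
  epi_condition L m f -> closed_formula L m f.
Proof.
  intros HL Hm Hf Hdom Hepi x Hdx eps Heps l. split.
  - intros Hs eta Heta.
    destruct (proj1 (esub_iff L _ eps x l (F_not_minf m f Hf)) Hs) as [Hl [a [Hx Hc]]].
    assert (Ha : a = rsum m (fun i => rb (f i x))).
    { rewrite (dom_F m f x Hf Hdx) in Hx. injection Hx; auto. }
    set (r := l x - a + eps).
    assert (Hcl := proj2 (Hepi (l, r)) (Logic.conj Hl Hc)).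
    destruct Hcl as [_ Hcl]. split; auto. intros xs d Hd.
    destruct (Hcl (x :: xs) (Rmin d (eta / 4)) (Rmin_pos d (eta / 4) Hd ltac:(lra)))
      as [p' [[pi [Hpi [Hfst Hsnd]]] [Hl' [Hn Hr]]]].
    assert (Hmd : Rmin d (eta/4) <= d) by apply Rmin_l.
    assert (Hme : Rmin d (eta/4) <= eta/4) by apply Rmin_r.
    destruct (nbhd_cons x xs d _ l (fst p') Hmd Hn) as [Hn1 Hn2]. simpl in Hn1, Hn2, Hr.
    set (li := fun i => fst (pi i)).
    assert (Hli : forall i, (i < m)%nat -> L (li i)) by (intros i Hi; apply (Hpi i Hi)).
    assert (Hb : Rbar_le (Rbar_sumn m (fun i => conj (f i) (li i))) (Finite (snd p'))).
    { rewrite Hsnd. rewrite <- (sumn_Finite m (fun i => Finite (snd (pi i)))) by auto.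
      apply sumn_le. intros i Hi. apply (Hpi i Hi). }
    destruct (decomp L m f x li (eps + eta / 2) Hf Hdx Hli) as [e [He [Hse Hes]]].
    { eapply Rbar_le_trans; [apply Hb|]. simpl. unfold li. rewrite <- Hfst, <- Ha.
      apply rabs_lt in Hn2. apply rabs_lt in Hr. unfold r in Hr. lra. }
    destruct (bump L m f x li e (eps + eta) Hm He ltac:(lra) Hes) as [e' [He' [Hse' Hes']]].
    exists (fst p'). split; [|split; auto].
    exists e'. split; auto. split; auto. exists li. split; auto.
  - intros H. apply esub_closed. intros eta Heta. apply (closure_esub L m f x); auto.
Qed.

Theorem mainTheorem11 (X : Type) (L : (X -> R) -> Prop) (m : nat)
  (f : nat -> X -> Rbar)
  (HX : inhabited X)
  (HL : is_linear_family L)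
  (Hm : (2 <= m)%nat)
  (Hf : forall i x, (i < m)%nat -> f i x <> m_infty)
  (Hdom : exists x, in_all_dom m f x) :
  (prop_i L m f <-> prop_iii L m f) /\
  (prop_iii L m f <-> prop_iv L m f) /\
  (prop_iv L m f -> prop_v L m f) /\
  (prop_v L m f -> prop_ii L m f) /\
  (closed_formula L m f ->
     (prop_i L m f <-> prop_ii L m f) /\ (prop_i L m f <-> prop_iii L m f) /\
     (prop_i L m f <-> prop_iv L m f) /\ (prop_i L m f <-> prop_v L m f)) /\
  (epi_condition L m f -> closed_formula L m f).
Proof.
  assert (Hm0 : (0 < m)%nat) by lia.
  assert (I4 := i_iv L m f Hf Hdom).
  assert (I43 := iv_iii L m f HL Hm0 Hf Hdom).
  assert (I34 := iii_iv L m f Hf Hdom).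
  assert (I31 := iii_i L m f).
  assert (I45 := iv_v L m f Hf).
  assert (I52 := v_ii L m f Hf).
  split. tauto. split. tauto. split. tauto. split. tauto. split.
  - intros Hcf. assert (I21 := ii_i L m f Hcf). tauto.
  - apply epi_cf; auto.
Qed.
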